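(* Let $H(x)=\cos x$ for $|x|\le\pi/2$ and $H(x)=0$ for $|x|\ge\pi/2$. Let $(\lambda_n)_{n\in\mathbb{Z}}$ be a strictly increasing sequence of real numbers satisfying $\lambda_{n+2}-\lambda_n\ge\pi$ for all $n\in\mathbb{Z}$. Then for every finitely supported sequence $(a_n)_{n\in\mathbb{Z}}$ of real numbers, the function $G(x)=\sum_n a_n H^2(x+\lambda_n)$ satisfies \[ \int_{-\infty}^{\infty}|G'(x)|^2\,dx\le 4\int_{-\infty}^{\infty}|G(x)|^2\,dx . \]
   Context: $H^2(x)=(H(x))^2$. *)

(* Defs.v *)
From Stdlib Require Import Reals Lra Lia ZArith.
Open Scope R_scope.

Definition H (x : R) : R :=
  if Rle_dec (Rabs x) (PI / 2) then cos x else 0.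

Definition H2 (x : R) : R := (H x) ^ 2.

Definition improper_integral (f : R -> R) (I : R) : Prop :=
  (forall a b : R, inhabited (Riemann_integrable f a b)) /\
  (forall eps : R, 0 < eps -> exists M : R,
     forall (a b : R) (pr : Riemann_integrable f a b),
       a <= - M -> M <= b -> Rabs (RiemannInt pr - I) < eps).

(* G(x) = sum_n a_n H^2(x + lambda_n), for a supported in [-N, N]. *)
Definition Gfun (lam a : Z -> R) (N : nat) (x : R) : R :=
  sum_f_R0 (fun k => a (Z.of_nat k - Z.of_nat N)%Z
                     * H2 (x + lam (Z.of_nat k - Z.of_nat N)%Z)) (2 * N).

(* Main.v *)
Require Import Defs.
From Stdlib Require Import Reals ZArith Lra Lia FunctionalExtensionality.
Open Scope R_scope.

Lemma ftc (F f : R -> R) a b (pr : Riemann_integrable f a b) :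
  a <= b -> (forall x, derivable_pt_lim F x (f x)) -> (forall x, continuity_pt f x) ->
  RiemannInt pr = F b - F a.
Proof.
  intros Hab HF Hc.
  assert (H0 : forall x, a <= x <= b -> continuity_pt f x) by auto.
  rewrite (RiemannInt_P20 Hab (FTC_P1 Hab H0) pr).
  assert (H1 := RiemannInt_P29 Hab H0).
  assert (H2 : antiderivative f F a b).
  { split; [|exact Hab]. intros x _. exists (exist _ (f x) (HF x)).
    reflexivity. }
  destruct (antiderivative_Ucte f _ _ _ _ H1 H2) as [C HC].
  rewrite !HC; [ring| lra | lra].
Qed.

Lemma dpl_ext f g x l l' : derivable_pt_lim f x l -> l = l' -> (forall y, f y = g y) ->
  derivable_pt_lim g x l'.
Proof.
  intros H <- E. replace g with f; auto. apply functional_extensionality; auto.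
Qed.

Lemma cont_ext f g x : continuity_pt f x -> (forall y, f y = g y) -> continuity_pt g x.
Proof.
  intros H E. replace g with f; auto. apply functional_extensionality; auto.
Qed.

Lemma dpl_local f g x l d : 0 < d -> (forall y, x - d < y < x + d -> f y = g y) ->
  derivable_pt_lim g x l -> derivable_pt_lim f x l.
Proof.
  intros Hd E H eps He. destruct (H eps He) as [del Hdel].
  assert (Hm : 0 < Rmin d del) by (apply Rmin_pos; [lra | apply cond_pos]).
  exists (mkposreal _ Hm). intros h hn hl. simpl in hl.
  assert (h1 := Rmin_l d del). assert (h2 := Rmin_r d del).
  apply Rabs_def2 in hl.
  rewrite (E (x+h)) by lra. rewrite (E x) by lra.
  apply Hdel; auto. apply Rabs_def1; lra.
Qed.

Lemma dpl_glue f g1 g2 x l d : 0 < d ->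
  (forall y, x - d < y <= x -> f y = g1 y) ->
  (forall y, x <= y < x + d -> f y = g2 y) ->
  derivable_pt_lim g1 x l -> derivable_pt_lim g2 x l -> derivable_pt_lim f x l.
Proof.
  intros Hd E1 E2 H1 H2 eps He. destruct (H1 eps He) as [del1 Hdel1].
  destruct (H2 eps He) as [del2 Hdel2].
  assert (Hm : 0 < Rmin d (Rmin del1 del2))
    by (apply Rmin_pos; [lra | apply Rmin_pos; apply cond_pos]).
  exists (mkposreal _ Hm). intros h hn hl. simpl in hl.
  assert (h1 := Rmin_l d (Rmin del1 del2)). assert (h2 := Rmin_r d (Rmin del1 del2)).
  assert (h3 := Rmin_l del1 del2). assert (h4 := Rmin_r del1 del2).
  apply Rabs_def2 in hl.
  destruct (Rlt_or_le h 0) as [hneg|hpos].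
  - rewrite (E1 (x+h)) by lra. rewrite (E1 x) by lra.
    apply Hdel1; auto. apply Rabs_def1; lra.
  - rewrite (E2 (x+h)) by lra. rewrite (E2 x) by lra.
    apply Hdel2; auto. apply Rabs_def1; lra.
Qed.

Lemma dpl_cst c x : derivable_pt_lim (fun _ => c) x 0.
Proof. exact (derivable_pt_lim_const c x). Qed.

Lemma dpl_shift f c x l : derivable_pt_lim f (x + c) l ->
  derivable_pt_lim (fun y => f (y + c)) x l.
Proof.
  intros H eps He. destruct (H eps He) as [del Hd]. exists del.
  intros h hn hl. replace (x + h + c) with (x + c + h) by ring. apply Hd; auto.
Qed.

Definition clampf (al be y : R) := (Rabs (y - al) - Rabs (y - be) + al + be) / 2.

Lemma clamp_lo al be y : al <= be -> y <= al -> clampf al be y = al.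
Proof. intros. unfold clampf, Rabs; destruct (Rcase_abs _); destruct (Rcase_abs _); lra. Qed.
Lemma clamp_mid al be y : al <= y <= be -> clampf al be y = y.
Proof. intros. unfold clampf, Rabs; destruct (Rcase_abs _); destruct (Rcase_abs _); lra. Qed.
Lemma clamp_hi al be y : al <= be -> be <= y -> clampf al be y = be.
Proof. intros. unfold clampf, Rabs; destruct (Rcase_abs _); destruct (Rcase_abs _); lra. Qed.

Lemma clamp_deriv al be (P p dF : R -> R) : al <= be ->
  (forall x, derivable_pt_lim P x (p x)) -> p al = 0 -> p be = 0 ->
  (forall x, al <= x <= be -> dF x = p x) -> (forall x, x < al \/ be < x -> dF x = 0) ->
  forall x, derivable_pt_lim (fun y => P (clampf al be y)) x (dF x).
Proof.
  intros Hab HP Pa Pb D1 D2 x.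
  destruct (Rtotal_order x al) as [Hl|[He|Hg]].
  - rewrite D2 by lra. apply (dpl_local _ (fun _ => P al) x 0 (al - x)); [lra| |apply dpl_cst].
    intros y Hy. rewrite clamp_lo; lra.
  - subst x. rewrite D1 by lra. rewrite Pa. destruct (Rle_lt_or_eq _ _ Hab) as [Hlt|Heq].
    + apply (dpl_glue _ (fun _ => P al) P al 0 (be - al)); [lra| | | apply dpl_cst|].
      * intros y Hy. rewrite clamp_lo; lra.
      * intros y Hy. rewrite clamp_mid; lra.
      * rewrite <- Pa. apply HP.
    + subst be. apply (dpl_local _ (fun _ => P al) al 0 1); [lra| |apply dpl_cst].
      intros y Hy. destruct (Rle_or_lt y al).
      * rewrite clamp_lo; lra.
      * rewrite clamp_hi; lra.
  - destruct (Rtotal_order x be) as [Hl'|[He'|Hg']].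
    + rewrite D1 by lra. apply (dpl_local _ P x (p x) (Rmin (x - al) (be - x)));
        [apply Rmin_pos; lra| |apply HP].
      intros y Hy. assert (h1 := Rmin_l (x - al) (be - x)). assert (h2 := Rmin_r (x - al) (be - x)).
      rewrite clamp_mid; lra.
    + subst x. rewrite D1 by lra. rewrite Pb.
      apply (dpl_glue _ P (fun _ => P be) be 0 (be - al)); [lra| | | |apply dpl_cst].
      * intros y Hy. rewrite clamp_mid; lra.
      * intros y Hy. rewrite clamp_hi; lra.
      * rewrite <- Pb. apply HP.
    + rewrite D2 by lra. apply (dpl_local _ (fun _ => P be) x 0 (x - be)); [lra| |apply dpl_cst].
      intros y Hy. rewrite clamp_hi; lra.
Qed.

Lemma cont_clamp al be x : continuity_pt (clampf al be) x.
Proof.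
  assert (Ha : forall c, continuity_pt (fun y => Rabs (y - c)) x).
  { intro c. apply (cont_ext (comp Rabs (fun y => y - c))); [|reflexivity].
    apply continuity_pt_comp.
    - apply (cont_ext (id - fct_cte c)%F); [|reflexivity].
      apply continuity_pt_minus; [apply derivable_continuous_pt; apply derivable_pt_id|
        apply continuity_pt_const; intros ? ?; reflexivity].
    - apply Rcontinuity_abs. }
  apply (cont_ext (mult_real_fct (/2) ((fun y => Rabs (y - al)) - (fun y => Rabs (y - be)) + fct_cte (al + be))%F)).
  2:{ intro y. unfold clampf, mult_real_fct, plus_fct, minus_fct, fct_cte. field. }
  apply continuity_pt_scal. apply continuity_pt_plus.
  - apply continuity_pt_minus; apply Ha.
  - apply continuity_pt_const; intros ? ?; reflexivity.
Qed.

Definition cl := clampf (-(PI/2)) (PI/2).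
Definition H2d (y : R) := - sin (2 * cl y).

Lemma hp_pos : 0 < PI/2.
Proof. assert (H := PI_RGT_0). lra. Qed.

Lemma H2_in y : -(PI/2) <= y <= PI/2 -> H2 y = cos y ^ 2 /\ H2d y = - sin (2 * y).
Proof.
  intros Hy. unfold H2d, cl. rewrite clamp_mid by lra. split; auto.
  unfold H2, H. destruct (Rle_dec (Rabs y) (PI/2)) as [h|h]; auto.
  exfalso. apply h. apply Rabs_le. lra.
Qed.

Lemma H2_out y : PI/2 <= Rabs y -> H2 y = 0 /\ H2d y = 0.
Proof.
  intros Hy. assert (hp := hp_pos).
  assert (Hc : y <= -(PI/2) \/ PI/2 <= y).
  { unfold Rabs in Hy. destruct (Rcase_abs y); lra. }
  split.
  - unfold H2, H. destruct (Rle_dec (Rabs y) (PI/2)) as [h|h]; [|simpl; ring].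
    assert (Rabs y = PI/2) by lra.
    destruct Hc as [Hc|Hc].
    + replace y with (-(PI/2)) by (unfold Rabs in *; destruct (Rcase_abs y); lra).
      rewrite cos_neg, cos_PI2. simpl; ring.
    + replace y with (PI/2) by (unfold Rabs in *; destruct (Rcase_abs y); lra).
      rewrite cos_PI2. simpl; ring.
  - unfold H2d, cl. destruct Hc as [Hc|Hc].
    + rewrite clamp_lo by lra. replace (2 * - (PI/2)) with (- PI) by field.
      rewrite sin_neg, sin_PI. ring.
    + rewrite clamp_hi by lra. replace (2 * (PI/2)) with PI by field.
      rewrite sin_PI. ring.
Qed.

Lemma H2_clamp y : H2 y = cos (cl y) ^ 2.
Proof.
  assert (hp := hp_pos). unfold cl.
  destruct (Rle_or_lt y (-(PI/2))) as [h1|h1].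
  - rewrite clamp_lo by lra. rewrite cos_neg, cos_PI2.
    replace (0^2) with 0 by ring. apply H2_out. unfold Rabs; destruct (Rcase_abs y); lra.
  - destruct (Rle_or_lt y (PI/2)) as [h2|h2].
    + rewrite clamp_mid by lra. apply H2_in; lra.
    + rewrite clamp_hi by lra. rewrite cos_PI2.
      replace (0^2) with 0 by ring. apply H2_out. unfold Rabs; destruct (Rcase_abs y); lra.
Qed.

Lemma cos2_deriv x : derivable_pt_lim (fun z => cos z ^ 2) x (- sin (2 * x)).
Proof.
  apply (dpl_ext (cos * cos)%F _ x _ _ (derivable_pt_lim_mult cos cos x _ _
     (derivable_pt_lim_cos x) (derivable_pt_lim_cos x))).
  - rewrite sin_2a. unfold mult_fct. ring.
  - intro y. unfold mult_fct. ring.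
Qed.

Lemma H2_deriv x : derivable_pt_lim H2 x (H2d x).
Proof.
  assert (hp := hp_pos).
  apply (dpl_ext (fun y => (fun z => cos z ^ 2) (cl y)) _ x (H2d x) _).
  2: reflexivity. 2: intro y; symmetry; apply H2_clamp.
  unfold cl. apply (clamp_deriv (-(PI/2)) (PI/2) (fun z => cos z ^ 2) (fun z => - sin (2 * z)) H2d); try lra.
  - apply cos2_deriv.
  - replace (2 * - (PI/2)) with (- PI) by field. rewrite sin_neg, sin_PI. ring.
  - replace (2 * (PI/2)) with PI by field. rewrite sin_PI. ring.
  - intros y Hy. apply H2_in; auto.
  - intros y Hy. apply H2_out. unfold Rabs; destruct (Rcase_abs y); lra.
Qed.

Lemma H2d_cont x : continuity_pt H2d x.
Proof.
  apply (cont_ext (comp (fun t => - sin (2 * t)) cl)); [|reflexivity].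
  apply continuity_pt_comp. apply cont_clamp.
  apply derivable_continuous_pt.
  exists (- (cos (2 * cl x) * 2)).
  apply (dpl_ext (comp (fun t => - t) (comp sin (fun t => 2 * t))) _ (cl x) (- 1 * (cos (2 * cl x) * 2)) _); [|ring|reflexivity].
  apply derivable_pt_lim_comp. apply derivable_pt_lim_comp.
  - apply (dpl_ext (mult_real_fct 2 id) _ _ _ _ (derivable_pt_lim_scal id 2 _ _ (derivable_pt_lim_id _))); [ring|reflexivity].
  - apply derivable_pt_lim_sin.
  - apply (dpl_ext (- id)%F _ _ _ _ (derivable_pt_lim_opp id _ _ (derivable_pt_lim_id _))); [ring|reflexivity].
Qed.

Definition fp lam mu x := 4 * H2 (x+lam) * H2 (x+mu) - H2d (x+lam) * H2d (x+mu).
Definition Qf lam mu x := x + sin (2*x + 2*lam)/2 + sin (2*x + 2*mu)/2 + sin (4*x + (2*lam + 2*mu))/4.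
Definition qf lam mu x := 1 + cos (2*x+2*lam) + cos (2*x+2*mu) + cos (4*x + (2*lam+2*mu)).
Definition alf lam mu := Rmax (-lam) (-mu) - PI/2.
Definition bef lam mu := Rmin (-lam) (-mu) + PI/2.
Definition Phi lam mu x := if Rle_dec (Rabs (lam - mu)) PI
  then Qf lam mu (clampf (alf lam mu) (bef lam mu) x) else 0.

Lemma lin_sin k c x : derivable_pt_lim (fun y => sin (k*y + c)) x (k * cos (k*x+c)).
Proof.
  assert (Hl : derivable_pt_lim (fun y => k*y + c) x k).
  { intros eps He. exists (mkposreal 1 Rlt_0_1). intros h hn _.
    replace ((k * (x + h) + c - (k * x + c)) / h - k) with 0 by (field; auto).
    rewrite Rabs_R0; auto. }
  apply (dpl_ext _ _ _ _ _ (derivable_pt_lim_comp _ sin x _ _ Hl (derivable_pt_lim_sin _))).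
  - ring.
  - reflexivity.
Qed.

Lemma Qf_deriv lam mu x : derivable_pt_lim (Qf lam mu) x (qf lam mu x).
Proof.
  assert (H1 := lin_sin 2 (2*lam) x). assert (H2 := lin_sin 2 (2*mu) x).
  assert (H3 := lin_sin 4 (2*lam+2*mu) x).
  assert (Hs := fun f l c (H : derivable_pt_lim f x l) => derivable_pt_lim_scal f c x l H).
  assert (H0 := derivable_pt_lim_id x).
  assert (T := derivable_pt_lim_plus _ _ _ _ _
     (derivable_pt_lim_plus _ _ _ _ _ (derivable_pt_lim_plus _ _ _ _ _ H0 (Hs _ _ (/2) H1))
        (Hs _ _ (/2) H2)) (Hs _ _ (/4) H3)).
  apply (dpl_ext _ _ _ _ _ T).
  - unfold qf. field.
  - intro y. unfold Qf, plus_fct, mult_real_fct, id. field.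
Qed.

Lemma qzero u v : cos u = -1 -> sin u = 0 -> 1 + cos u + cos v + cos (u+v) = 0.
Proof. intros h1 h2. rewrite cos_plus, h1, h2. ring. Qed.

Lemma vanish u v : PI <= Rabs (u - v) -> H2 u * H2 v = 0 /\ H2d u * H2d v = 0.
Proof.
  intros Huv.
  destruct (Rle_or_lt (PI/2) (Rabs u)) as [hu|hu].
  - destruct (H2_out u hu) as [-> ->]. split; ring.
  - destruct (Rle_or_lt (PI/2) (Rabs v)) as [hv|hv].
    + destruct (H2_out v hv) as [-> ->]. split; ring.
    + exfalso. assert (Rabs (u - v) <= Rabs u + Rabs v).
      { unfold Rminus. rewrite <- (Rabs_Ropp v). apply Rabs_triang. }
      lra.
Qed.

Lemma fp_in lam mu x : -(PI/2) <= x + lam <= PI/2 -> -(PI/2) <= x + mu <= PI/2 ->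
  fp lam mu x = qf lam mu x.
Proof.
  intros h1 h2. unfold fp, qf.
  destruct (H2_in _ h1) as [-> ->]. destruct (H2_in _ h2) as [-> ->].
  replace (4 * x + (2 * lam + 2 * mu)) with (2 * (x + lam) + 2 * (x + mu)) by ring.
  replace (2 * x + 2 * lam) with (2 * (x + lam)) by ring.
  replace (2 * x + 2 * mu) with (2 * (x + mu)) by ring.
  rewrite (cos_plus (2 * (x + lam))), !sin_2a, !cos_2a_cos. ring.
Qed.

Lemma qzero2 u v : cos u = -1 -> sin u = 0 -> 1 + cos v + cos u + cos (v+u) = 0.
Proof. intros h1 h2. rewrite cos_plus, h1, h2. ring. Qed.

Lemma alf_le_bef lam mu : Rabs (lam - mu) <= PI -> alf lam mu <= bef lam mu.
Proof.
  intros h. unfold alf, bef, Rmax, Rmin, Rabs in *.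
  destruct (Rle_dec (-lam) (-mu)); destruct (Rcase_abs (lam - mu)); lra.
Qed.

Lemma Phi_deriv lam mu x : derivable_pt_lim (Phi lam mu) x (fp lam mu x).
Proof.
  assert (hp := hp_pos).
  unfold Phi. destruct (Rle_dec (Rabs (lam - mu)) PI) as [h|h].
  - apply (clamp_deriv (alf lam mu) (bef lam mu) (Qf lam mu) (qf lam mu) (fp lam mu)).
    + apply alf_le_bef; auto.
    + apply Qf_deriv.
    + unfold qf, alf, Rmax. destruct (Rle_dec (-lam) (-mu)).
      * replace (4 * (- mu - PI / 2) + (2 * lam + 2 * mu)) with
          ((2 * (- mu - PI / 2) + 2 * lam) + (2 * (- mu - PI / 2) + 2 * mu)) by ring.
        apply qzero2; replace (2 * (- mu - PI / 2) + 2 * mu) with (- PI) by field.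
        rewrite cos_neg, cos_PI; ring. rewrite sin_neg, sin_PI; ring.
      * replace (4 * (- lam - PI / 2) + (2 * lam + 2 * mu)) with
          ((2 * (- lam - PI / 2) + 2 * lam) + (2 * (- lam - PI / 2) + 2 * mu)) by ring.
        apply qzero; replace (2 * (- lam - PI / 2) + 2 * lam) with (- PI) by field.
        rewrite cos_neg, cos_PI; ring. rewrite sin_neg, sin_PI; ring.
    + unfold qf, bef, Rmin. destruct (Rle_dec (-lam) (-mu)).
      * replace (4 * (- lam + PI / 2) + (2 * lam + 2 * mu)) with
          ((2 * (- lam + PI / 2) + 2 * lam) + (2 * (- lam + PI / 2) + 2 * mu)) by ring.
        apply qzero; replace (2 * (- lam + PI / 2) + 2 * lam) with PI by field.
        apply cos_PI. apply sin_PI.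
      * replace (4 * (- mu + PI / 2) + (2 * lam + 2 * mu)) with
          ((2 * (- mu + PI / 2) + 2 * lam) + (2 * (- mu + PI / 2) + 2 * mu)) by ring.
        apply qzero2; replace (2 * (- mu + PI / 2) + 2 * mu) with PI by field.
        apply cos_PI. apply sin_PI.
    + intros y Hy. apply fp_in; unfold alf, bef, Rmax, Rmin in Hy;
        destruct (Rle_dec (-lam) (-mu)); lra.
    + intros y Hy. unfold alf, bef, Rmax, Rmin in Hy. unfold fp.
      assert (Hc : PI/2 <= Rabs (y + lam) \/ PI/2 <= Rabs (y + mu)).
      { unfold Rabs. destruct (Rcase_abs (y+lam)); destruct (Rcase_abs (y+mu));
          destruct (Rle_dec (-lam) (-mu)); lra. }
      destruct Hc as [Hc|Hc]; destruct (H2_out _ Hc) as [-> ->]; ring.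
  - apply (dpl_ext (fun _ => 0) _ x 0 _ (dpl_cst 0 x)); [|reflexivity].
    unfold fp. destruct (vanish (x + lam) (x + mu)) as [E1 E2].
    + replace (x + lam - (x + mu)) with (lam - mu) by ring. lra.
    + replace (4 * H2 (x + lam) * H2 (x + mu)) with (4 * (H2 (x + lam) * H2 (x + mu))) by ring.
      rewrite E1, E2. ring.
Qed.

Definition Vf d := if Rle_dec d PI then PI - d + sin (2*d)/2 else 0.

Lemma sA t : sin (t - PI) = - sin t.
Proof. rewrite sin_minus, sin_PI, cos_PI. ring. Qed.
Lemma sB t : sin (2*PI - t) = - sin t.
Proof. rewrite sin_minus, sin_2PI, cos_2PI. ring. Qed.
Lemma sC t : sin (t - 2*PI) = sin t.
Proof. rewrite sin_minus, sin_2PI, cos_2PI. ring. Qed.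

Lemma Phi_val lam mu M : Rabs lam + PI <= M -> Rabs mu + PI <= M ->
  Phi lam mu M - Phi lam mu (-M) = Vf (Rabs (lam - mu)).
Proof.
  intros h1 h2. assert (hp := hp_pos).
  assert (l1 := Rle_abs lam). assert (l2 := Rle_abs mu).
  assert (l3 := Rle_abs (-lam)). assert (l4 := Rle_abs (-mu)).
  rewrite Rabs_Ropp in l3, l4.
  unfold Phi, Vf. destruct (Rle_dec (Rabs (lam - mu)) PI) as [h|h]; [|ring].
  assert (hab := alf_le_bef _ _ h).
  rewrite (clamp_hi _ _ M hab).
  2:{ unfold bef, Rmin. destruct (Rle_dec (-lam) (-mu)); lra. }
  rewrite (clamp_lo _ _ (-M) hab).
  2:{ unfold alf, Rmax. destruct (Rle_dec (-lam) (-mu)); lra. }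
  unfold alf, bef, Rmax, Rmin, Qf. destruct (Rle_dec (-lam) (-mu)) as [c|c].
  - rewrite Rabs_pos_eq by lra. set (d := lam - mu).
    replace (2 * (- lam + PI / 2) + 2 * lam) with PI by field.
    replace (2 * (- lam + PI / 2) + 2 * mu) with (PI - 2 * d) by (unfold d; field).
    replace (4 * (- lam + PI / 2) + (2 * lam + 2 * mu)) with (2 * PI - 2 * d) by (unfold d; field).
    replace (2 * (- mu - PI / 2) + 2 * lam) with (2 * d - PI) by (unfold d; field).
    replace (2 * (- mu - PI / 2) + 2 * mu) with (- PI) by field.
    replace (4 * (- mu - PI / 2) + (2 * lam + 2 * mu)) with (2 * d - 2 * PI) by (unfold d; field).
    rewrite sin_PI_x, sB, sC, sA, sin_neg, sin_PI. unfold d. field.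
  - rewrite Rabs_left1 by lra. set (d := mu - lam).
    replace (- (lam - mu)) with d by (unfold d; ring).
    replace (2 * (- mu + PI / 2) + 2 * mu) with PI by field.
    replace (2 * (- mu + PI / 2) + 2 * lam) with (PI - 2 * d) by (unfold d; field).
    replace (4 * (- mu + PI / 2) + (2 * lam + 2 * mu)) with (2 * PI - 2 * d) by (unfold d; field).
    replace (2 * (- lam - PI / 2) + 2 * mu) with (2 * d - PI) by (unfold d; field).
    replace (2 * (- lam - PI / 2) + 2 * lam) with (- PI) by field.
    replace (4 * (- lam - PI / 2) + (2 * lam + 2 * mu)) with (2 * d - 2 * PI) by (unfold d; field).
    rewrite sin_PI_x, sB, sC, sA, sin_neg, sin_PI. unfold d. field.
Qed.

Lemma sin_le_id x : 0 <= x -> sin x <= x.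
Proof.
  intros h. destruct (Rle_lt_or_eq _ _ h) as [h'|h'].
  - left. apply sin_lt_x; auto.
  - subst. rewrite sin_0. lra.
Qed.

Lemma V1 d : 0 <= d -> 0 <= Vf d <= PI.
Proof.
  intros h. unfold Vf. destruct (Rle_dec d PI) as [c|c]; [|assert (H := PI_RGT_0); lra].
  split.
  - replace (2 * d) with (2 * PI - 2 * (PI - d)) by ring. rewrite sB.
    assert (HH := sin_le_id (2 * (PI - d)) ltac:(lra)). lra.
  - assert (HH := sin_le_id (2 * d) ltac:(lra)). lra.
Qed.

Lemma V2 d e : 0 <= d -> 0 <= e -> PI <= d + e -> Vf d + Vf e <= PI.
Proof.
  intros hd he hde.
  assert (A := V1 d hd). assert (B := V1 e he).
  unfold Vf in *. destruct (Rle_dec d PI) as [c|c]; destruct (Rle_dec e PI) as [c'|c']; try lra.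
  set (s := d + e - PI).
  replace (2 * e) with ((s + (s - 2 * d)) + 2 * PI) by (unfold s; ring).
  rewrite sin_plus, sin_2PI, cos_2PI.
  replace (2 * d) with (s + (2 * d - s)) at 1 by ring.
  replace (s - 2 * d) with (- (2 * d - s)) by ring.
  rewrite !sin_plus, sin_neg, cos_neg.
  assert (Hs : 0 <= sin s) by (apply sin_ge_0; unfold s; lra).
  assert (Hs2 := sin_le_id s ltac:(unfold s; lra)).
  assert (Hc := COS_bound (2 * d - s)).
  assert (sin s * cos (2 * d - s) <= sin s) by nra.
  unfold s in *. lra.
Qed.

Fixpoint sm (f : nat -> R) (n : nat) : R :=
  match n with O => 0 | S m => sm f m + f m end.

Lemma sum_sm f n : sum_f_R0 f n = sm f (S n).
Proof. induction n; simpl in *. ring. rewrite IHn. simpl. ring. Qed.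

Lemma sm_ext f g n : (forall k, (k < n)%nat -> f k = g k) -> sm f n = sm g n.
Proof. induction n; intros H; simpl; auto. rewrite IHn, H; auto. Qed.

Lemma sm_lin f g a b n : sm (fun k => a * f k + b * g k) n = a * sm f n + b * sm g n.
Proof. induction n; simpl. ring. rewrite IHn. ring. Qed.

Lemma sm_zero f n : (forall k, (k < n)%nat -> f k = 0) -> sm f n = 0.
Proof. induction n; intros H; simpl; auto. rewrite IHn, H; auto. ring. Qed.

Lemma sm_mult_r f c n : sm f n * c = sm (fun k => f k * c) n.
Proof. induction n; simpl. ring. rewrite <- IHn. ring. Qed.

Lemma prod_exp u v n :
  (forall i j, (i + 2 <= j)%nat -> u i * v j = 0 /\ u j * v i = 0) ->
  sm u n * sm v n = sm (fun k => u k * v k) n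
     + sm (fun k => u k * v (S k) + u (S k) * v k) (pred n).
Proof.
  intros Hz. induction n as [|m IH]; simpl. ring.
  destruct m as [|m'].
  - simpl. ring.
  - simpl pred in IH. simpl sm at 3.
    replace ((sm u (S m') + u (S m')) * (sm v (S m') + v (S m')))
      with (sm u (S m') * sm v (S m') + sm u (S m') * v (S m') + u (S m') * sm v (S m')
            + u (S m') * v (S m')) by ring.
    rewrite IH. simpl sm.
    rewrite (Rmult_comm (u (S m'))).
    rewrite !Rmult_plus_distr_r, !sm_mult_r.
    rewrite (sm_zero (fun k => u k * v (S m'))).
    rewrite (sm_zero (fun k => v k * u (S m'))).
    + ring.
    + intros k Hk. rewrite Rmult_comm. apply (Hz k (S m')). lia.
    + intros k Hk. apply (Hz k (S m')). lia.
Qed.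

Lemma sm_deriv (F : nat -> R -> R) (d : nat -> R) x n :
  (forall k, derivable_pt_lim (F k) x (d k)) ->
  derivable_pt_lim (fun y => sm (fun k => F k y) n) x (sm d n).
Proof.
  intros H. induction n; simpl.
  - apply dpl_cst.
  - exact (derivable_pt_lim_plus _ _ _ _ _ IHn (H n)).
Qed.

Lemma sm_cont (F : nat -> R -> R) x n :
  (forall k, continuity_pt (F k) x) ->
  continuity_pt (fun y => sm (fun k => F k y) n) x.
Proof.
  intros H. induction n; simpl.
  - apply continuity_pt_const. intros ? ?; reflexivity.
  - exact (continuity_pt_plus _ _ _ IHn (H n)).
Qed.

Lemma sm_le f n k : (forall i, 0 <= f i) -> (k < n)%nat -> f k <= sm f n.
Proof.
  intros H. induction n; intros Hk; [lia|]. simpl.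
  assert (0 <= sm f n).
  { clear IHn Hk. induction n; simpl; [lra|]. specialize (H n). lra. }
  destruct (Nat.eq_dec k n) as [->|ne].
  - lra.
  - assert (f k <= sm f n) by (apply IHn; lia). specialize (H n). lra.
Qed.

Definition wseq (W : nat -> R) (m : nat) := match m with O => 0 | S m' => W m' end.

Lemma final_ineq (c W : nat -> R) :
  (forall k, 0 <= W k <= PI) -> (forall k, W k + W (S k) <= PI) ->
  forall m, (PI - wseq W m) * (c m * c m) <=
    sm (fun k => c k * c k * PI) (S m) + sm (fun k => 2 * (c k * c (S k)) * W k) m.
Proof.
  intros H1 H2. induction m.
  - simpl. lra.
  - simpl sm. simpl sm in IHm. simpl wseq in *.
    assert (A : wseq W m + W m <= PI).
    { destruct m; simpl; [specialize (H1 O); lra | apply H2]. }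
    assert (B := H1 m).
    assert (C : - (W m * (c m * c m + c (S m) * c (S m))) <= 2 * (c m * c (S m)) * W m).
    { assert (0 <= W m * ((c m + c (S m)) * (c m + c (S m)))).
      { apply Rmult_le_pos; [lra| apply Rle_0_sqr]. }
      nra. }
    assert (D : 0 <= (PI - wseq W m - W m) * (c m * c m)).
    { apply Rmult_le_pos; [lra| apply Rle_0_sqr]. }
    nra.
Qed.

Lemma cint f a b : (forall x, continuity_pt f x) -> Riemann_integrable f a b.
Proof.
  intros Hc. destruct (Rle_dec a b) as [h|h].
  - apply continuity_implies_RiemannInt; auto.
  - apply RiemannInt_P1. apply continuity_implies_RiemannInt; auto. lra.
Qed.

Lemma CS f M : 0 < M -> (forall x, continuity_pt f x) -> (forall x, M <= Rabs x -> f x = 0) ->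
  forall pr : Riemann_integrable f (-M) M, improper_integral f (RiemannInt pr).
Proof.
  intros HM Hc Hz pr. split.
  - intros a b. constructor. apply cint; auto.
  - intros eps He. exists M. intros a b pr' ha hb.
    assert (Z1 : forall u v (p : Riemann_integrable f u v), u <= v ->
              (forall x, u < x < v -> M <= Rabs x) -> RiemannInt p = 0).
    { intros u v p huv hx.
      rewrite (RiemannInt_P18 p (RiemannInt_P14 u v 0) huv).
      - rewrite RiemannInt_P15. ring.
      - intros x Hx. unfold fct_cte. apply Hz. apply hx; auto. }
    pose proof (RiemannInt_P26 (cint f a (-M) Hc) (cint f (-M) b Hc) pr') as E1.
    pose proof (RiemannInt_P26 pr (cint f M b Hc) (cint f (-M) b Hc)) as E2.
    assert (Za : RiemannInt (cint f a (-M) Hc) = 0).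
    { apply Z1; [lra|]. intros x Hx. unfold Rabs; destruct (Rcase_abs x); lra. }
    assert (Zb : RiemannInt (cint f M b Hc) = 0).
    { apply Z1; [lra|]. intros x Hx. unfold Rabs; destruct (Rcase_abs x); lra. }
    rewrite Za in E1. rewrite Zb in E2.
    rewrite <- E1, <- E2. replace (0 + (RiemannInt pr + 0) - RiemannInt pr) with 0 by ring.
    rewrite Rabs_R0. auto.
Qed.

Lemma cont_shift f c x : continuity_pt f (x + c) -> continuity_pt (fun y => f (y + c)) x.
Proof.
  intros H. apply (cont_ext (comp f (fun y => y + c))); [|reflexivity].
  apply continuity_pt_comp; auto.
  apply derivable_continuous_pt. exists 1.
  apply (dpl_shift id c x 1 (derivable_pt_lim_id _)).
Qed.

Lemma abs_shift x l M : Rabs l + PI + 1 <= M -> M <= Rabs x -> PI / 2 <= Rabs (x + l).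
Proof.
  intros h1 h2. assert (Rabs x <= Rabs (x + l) + Rabs (- l)).
  { replace x with ((x + l) + - l) at 1 by ring. apply Rabs_triang. }
  rewrite Rabs_Ropp in H. assert (hp := PI_RGT_0). lra.
Qed.

Theorem mainTheorem3 (lam : Z -> R) (a : Z -> R) (N : nat)
  (hinc : forall n : Z, lam n < lam (n + 1)%Z)
  (hgap : forall n : Z, lam (n + 2)%Z - lam n >= PI)
  (hsupp : forall n : Z, (Z.of_nat N < Z.abs n)%Z -> a n = 0) :
  exists (G' : R -> R) (I1 I2 : R),
    (forall x : R, derivable_pt_lim (Gfun lam a N) x (G' x)) /\
    improper_integral (fun x => Rabs (G' x) ^ 2) I1 /\
    improper_integral (fun x => Rabs (Gfun lam a N x) ^ 2) I2 /\
    I1 <= 4 * I2.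
Proof.
  set (n := S (2 * N)).
  set (b := fun k : nat => a (Z.of_nat k - Z.of_nat N)%Z).
  set (l := fun k : nat => lam (Z.of_nat k - Z.of_nat N)%Z).
  assert (Fl1 : forall k, l k < l (S k)).
  { intro k. unfold l. replace (Z.of_nat (S k) - Z.of_nat N)%Z
      with ((Z.of_nat k - Z.of_nat N) + 1)%Z by lia. apply hinc. }
  assert (Fl2 : forall k, PI <= l (S (S k)) - l k).
  { intro k. unfold l. replace (Z.of_nat (S (S k)) - Z.of_nat N)%Z
      with ((Z.of_nat k - Z.of_nat N) + 2)%Z by lia. specialize (hgap (Z.of_nat k - Z.of_nat N)%Z). lra. }
  assert (Mono : forall i m, l i <= l (i + m)%nat).
  { intros i m. induction m. rewrite Nat.add_0_r; lra.
    replace (i + S m)%nat with (S (i + m)) by lia. specialize (Fl1 (i + m)%nat). lra. }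
  assert (Fl3 : forall i j, (i + 2 <= j)%nat -> PI <= Rabs (l i - l j)).
  { intros i j hij. replace j with ((S (S i)) + (j - (i + 2)))%nat by lia.
    assert (h1 := Mono (S (S i)) (j - (i + 2))%nat). assert (h2 := Fl2 i).
    assert (hp := PI_RGT_0). rewrite Rabs_left1 by lra. lra. }
  set (G' := fun x => sum_f_R0 (fun k => b k * H2d (x + l k)) (2 * N)).
  assert (EG : forall x, Gfun lam a N x = sm (fun k => b k * H2 (x + l k)) n).
  { intro x. unfold Gfun. rewrite sum_sm. reflexivity. }
  assert (EG' : forall x, G' x = sm (fun k => b k * H2d (x + l k)) n).
  { intro x. unfold G'. rewrite sum_sm. reflexivity. }
  assert (HG : forall x, derivable_pt_lim (Gfun lam a N) x (G' x)).
  { intro x. rewrite EG'.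
    apply (dpl_ext (fun y => sm (fun k => b k * H2 (y + l k)) n) _ x
       (sm (fun k => b k * H2d (x + l k)) n) _); [| reflexivity |].
    2:{ intro y. rewrite EG. reflexivity. }
    apply (sm_deriv (fun k y => b k * H2 (y + l k))). intro k.
    exact (derivable_pt_lim_scal _ (b k) x _ (dpl_shift H2 (l k) x _ (H2_deriv _))). }
  assert (CG : forall x, continuity_pt (Gfun lam a N) x).
  { intro x. apply derivable_continuous_pt. exists (G' x). apply HG. }
  assert (CG' : forall x, continuity_pt G' x).
  { intro x. apply (cont_ext (fun y => sm (fun k => b k * H2d (y + l k)) n)).
    2:{ intro y. rewrite EG'. reflexivity. }
    apply (sm_cont (fun k y => b k * H2d (y + l k))). intro k.
    apply (continuity_pt_scal (fun y => H2d (y + l k)) (b k)).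
    apply cont_shift. apply H2d_cont. }
  set (f1 := fun x => Rabs (G' x) ^ 2).
  set (f2 := fun x => Rabs (Gfun lam a N x) ^ 2).
  assert (Cf1 : forall x, continuity_pt f1 x).
  { intro x. apply (cont_ext (G' * G')%F).
    - apply continuity_pt_mult; apply CG'.
    - intro y. unfold f1, mult_fct. rewrite pow2_abs. ring. }
  assert (Cf2 : forall x, continuity_pt f2 x).
  { intro x. apply (cont_ext (Gfun lam a N * Gfun lam a N)%F).
    - apply continuity_pt_mult; apply CG.
    - intro y. unfold f2, mult_fct. rewrite pow2_abs. ring. }
  set (M := sm (fun k => Rabs (l k)) n + PI + 1).
  assert (HM : forall k, (k < n)%nat -> Rabs (l k) + PI + 1 <= M).
  { intros k hk. unfold M. assert (Rabs (l k) <= sm (fun k => Rabs (l k)) n).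
    { apply (sm_le (fun k => Rabs (l k))); auto. intro; apply Rabs_pos. }
    lra. }
  assert (Mpos : 0 < M).
  { assert (H0 := HM O ltac:(unfold n; lia)). assert (H1 := Rabs_pos (l O)).
    assert (hp := PI_RGT_0). lra. }
  assert (Zs : forall x k, (k < n)%nat -> M <= Rabs x -> H2 (x + l k) = 0 /\ H2d (x + l k) = 0).
  { intros x k hk hx. apply H2_out. apply (abs_shift x (l k) M); auto. }
  assert (Zf1 : forall x, M <= Rabs x -> f1 x = 0).
  { intros x hx. unfold f1. rewrite EG', sm_zero. rewrite Rabs_R0. ring.
    intros k hk. destruct (Zs x k hk hx) as [_ ->]. ring. }
  assert (Zf2 : forall x, M <= Rabs x -> f2 x = 0).
  { intros x hx. unfold f2. rewrite EG, sm_zero. rewrite Rabs_R0. ring.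
    intros k hk. destruct (Zs x k hk hx) as [-> _]. ring. }
  set (pr1 := cint f1 (-M) M Cf1). set (pr2 := cint f2 (-M) M Cf2).
  exists G', (RiemannInt pr1), (RiemannInt pr2).
  split; [exact HG|]. split; [apply CS; auto|]. split; [apply CS; auto|].
  set (D := fun x => sm (fun k => b k * b k * fp (l k) (l k) x) n
          + sm (fun k => 2 * (b k * b (S k)) * fp (l k) (l (S k)) x) (pred n)).
  set (A := fun x => sm (fun k => b k * b k * Phi (l k) (l k) x) n
          + sm (fun k => 2 * (b k * b (S k)) * Phi (l k) (l (S k)) x) (pred n)).
  assert (dA : forall x, derivable_pt_lim A x (D x)).
  { intro x. unfold A, D.
    apply (derivable_pt_lim_plus (fun y => sm (fun k => b k * b k * Phi (l k) (l k) y) n)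
             (fun y => sm (fun k => 2 * (b k * b (S k)) * Phi (l k) (l (S k)) y) (pred n))).
    - apply (sm_deriv (fun k y => b k * b k * Phi (l k) (l k) y)). intro k.
      exact (derivable_pt_lim_scal _ (b k * b k) x _ (Phi_deriv _ _ _)).
    - apply (sm_deriv (fun k y => 2 * (b k * b (S k)) * Phi (l k) (l (S k)) y)). intro k.
      exact (derivable_pt_lim_scal _ (2 * (b k * b (S k))) x _ (Phi_deriv _ _ _)). }
  assert (DE : forall x, D x = 4 * f2 x - f1 x).
  { intro x. unfold f1, f2. rewrite EG, EG', !pow2_abs.
    set (g := fun k => b k * H2 (x + l k)). set (g' := fun k => b k * H2d (x + l k)).
    change (sm (fun k => b k * H2 (x + l k)) n) with (sm g n).
    change (sm (fun k => b k * H2d (x + l k)) n) with (sm g' n).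
    replace (sm g n ^ 2) with (sm g n * sm g n) by ring.
    replace (sm g' n ^ 2) with (sm g' n * sm g' n) by ring.
    assert (Vz : forall i j, (i + 2 <= j)%nat ->
       H2 (x + l i) * H2 (x + l j) = 0 /\ H2d (x + l i) * H2d (x + l j) = 0).
    { intros i j hij. apply vanish. replace (x + l i - (x + l j)) with (l i - l j) by ring.
      apply Fl3; auto. }
    rewrite (prod_exp g g), (prod_exp g' g').
    - unfold D.
      rewrite (sm_ext (fun k => b k * b k * fp (l k) (l k) x)
                 (fun k => 4 * (g k * g k) + (-1) * (g' k * g' k))).
      2:{ intros k _. unfold g, g', fp. ring. }
      rewrite (sm_ext (fun k => 2 * (b k * b (S k)) * fp (l k) (l (S k)) x)
                 (fun k => 4 * (g k * g (S k) + g (S k) * g k)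
                           + (-1) * (g' k * g' (S k) + g' (S k) * g' k))).
      2:{ intros k _. unfold g, g', fp. ring. }
      rewrite !sm_lin. ring.
    - intros i j hij. destruct (Vz i j hij) as [_ E]. unfold g'.
      split; [replace (b i * H2d (x + l i) * (b j * H2d (x + l j)))
                with (b i * b j * (H2d (x + l i) * H2d (x + l j))) by ring
             | replace (b j * H2d (x + l j) * (b i * H2d (x + l i)))
                with (b i * b j * (H2d (x + l i) * H2d (x + l j))) by ring];
        rewrite E; ring.
    - intros i j hij. destruct (Vz i j hij) as [E _]. unfold g.
      split; [replace (b i * H2 (x + l i) * (b j * H2 (x + l j)))
                with (b i * b j * (H2 (x + l i) * H2 (x + l j))) by ring
             | replace (b j * H2 (x + l j) * (b i * H2 (x + l i)))
                with (b i * b j * (H2 (x + l i) * H2 (x + l j))) by ring];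
        rewrite E; ring. }
  assert (CD : forall x, continuity_pt D x).
  { intro x. apply (cont_ext (mult_real_fct 4 f2 - f1)%F).
    - apply continuity_pt_minus; [apply continuity_pt_scal|]; auto.
    - intro y. rewrite DE. reflexivity. }
  assert (IntD : RiemannInt (cint D (-M) M CD) = A M - A (-M)).
  { apply ftc; auto. lra. }
  assert (Aval : A M - A (-M) = sm (fun k => b k * b k * PI) n
            + sm (fun k => 2 * (b k * b (S k)) * Vf (Rabs (l k - l (S k)))) (pred n)).
  { unfold A.
    replace (sm (fun k => b k * b k * Phi (l k) (l k) M) n +
       sm (fun k => 2 * (b k * b (S k)) * Phi (l k) (l (S k)) M) (Init.Nat.pred n) -
       (sm (fun k => b k * b k * Phi (l k) (l k) (- M)) n +
        sm (fun k => 2 * (b k * b (S k)) * Phi (l k) (l (S k)) (- M)) (Init.Nat.pred n)))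
      with (1 * sm (fun k => b k * b k * Phi (l k) (l k) M) n +
            (-1) * sm (fun k => b k * b k * Phi (l k) (l k) (- M)) n
            + (1 * sm (fun k => 2 * (b k * b (S k)) * Phi (l k) (l (S k)) M) (Init.Nat.pred n)
            + (-1) * sm (fun k => 2 * (b k * b (S k)) * Phi (l k) (l (S k)) (- M)) (Init.Nat.pred n)))
      by ring.
    rewrite <- !sm_lin. f_equal; apply sm_ext; intros k hk.
    - assert (E := Phi_val (l k) (l k) M ltac:(specialize (HM k hk); lra) ltac:(specialize (HM k hk); lra)).
      replace (l k - l k) with 0 in E by ring. rewrite Rabs_R0 in E.
      unfold Vf in E. destruct (Rle_dec 0 PI) as [_|c]; [|assert (hp := PI_RGT_0); lra].
      replace (2 * 0) with 0 in E by ring. rewrite sin_0 in E.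
      replace (b k * b k * PI) with (b k * b k * (PI - 0 + 0 / 2)) by field. rewrite <- E. ring.
    - assert (hk' : (S k < n)%nat) by (unfold n in *; simpl in hk; lia).
      assert (hk'' : (k < n)%nat) by lia.
      rewrite <- (Phi_val (l k) (l (S k)) M); [ring | specialize (HM k hk''); lra | specialize (HM _ hk'); lra]. }
  assert (Pos : 0 <= A M - A (-M)).
  { rewrite Aval. set (W := fun k => Vf (Rabs (l k - l (S k)))).
    assert (W1 : forall k, 0 <= W k <= PI).
    { intro k. apply V1. apply Rabs_pos. }
    assert (W2 : forall k, W k + W (S k) <= PI).
    { intro k. unfold W. assert (h1 := Fl1 k). assert (h2 := Fl1 (S k)). assert (h3 := Fl2 k).
      rewrite !Rabs_left1 by lra. apply V2; lra. }
    assert (F := final_ineq b W W1 W2 (2 * N)).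
    assert (0 <= (PI - wseq W (2 * N)) * (b (2 * N)%nat * b (2 * N)%nat)).
    { apply Rmult_le_pos; [|apply Rle_0_sqr].
      destruct (2 * N)%nat; simpl; [assert (hp := PI_RGT_0); lra | specialize (W1 n0); lra]. }
    replace (pred n) with (2 * N)%nat by (unfold n; simpl; lia). unfold n. change (fun k : nat => 2 * (b k * b (S k)) * Vf (Rabs (l k - l (S k)))) with (fun k : nat => 2 * (b k * b (S k)) * W k). lra. }
  assert (C3 : forall x, continuity_pt (fun x => D x + 1 * f1 x) x).
  { intro x. apply (cont_ext (D + mult_real_fct 1 f1)%F); [|reflexivity].
    apply continuity_pt_plus; [|apply continuity_pt_scal]; auto. }
  assert (C4 : forall x, continuity_pt (fun x => (fun _ => 0) x + 4 * f2 x) x).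
  { intro x. apply (cont_ext (fct_cte 0 + mult_real_fct 4 f2)%F); [|reflexivity].
    apply continuity_pt_plus; [|apply continuity_pt_scal]; auto.
    apply continuity_pt_const; intros ? ?; reflexivity. }
  assert (C0 : forall x, continuity_pt (fun _ : R => 0) x).
  { intro x. apply continuity_pt_const; intros ? ?; reflexivity. }
  assert (P1 := RiemannInt_P13 (cint D (-M) M CD) pr1 (cint _ (-M) M C3)).
  assert (P2 := RiemannInt_P13 (cint _ (-M) M C0) pr2 (cint _ (-M) M C4)).
  assert (P3 : RiemannInt (cint _ (-M) M C3) = RiemannInt (cint _ (-M) M C4)).
  { apply RiemannInt_P18; [lra|]. intros x _. rewrite DE. ring. }
  assert (P4 : RiemannInt (cint (fun _ : R => 0) (-M) M C0) = 0).
  { rewrite (ftc (fun _ => 0) (fun _ => 0)); [ring|lra| |auto]. intro; apply dpl_cst. }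
  lra.
Qed.
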